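(* Let $K$ be a field, $P=K[x_1,\dots,x_n]$, $g_1,\dots,g_r\in P$ generating a proper ideal $I$, and $Z=(z_1,\dots,z_s)$ a tuple of distinct indeterminates among $x_1,\dots,x_n$ such that the procedure $\mathrm{CHECK}$ applied to $(g_1,\dots,g_r)$ and $Z$ returns a weight tuple $W\in\mathbb{N}^n$. Let $\sigma$ be a term ordering on $P$ compatible with the grading given by $W$. Let $t_1>_\sigma\dots>_\sigma t_m$ be all terms in $\bigcup_j\operatorname{Supp}(g_j)$, let $M\in\operatorname{Mat}_{r,m}(K)$ be the coefficient matrix of $g_1,\dots,g_r$ with respect to $(t_1,\dots,t_m)$, let $N\in\operatorname{Mat}_{r',r}(K)$ be such that $NM$ is in reduced row echelon form without zero rows, and let $(g'_1,\dots,g'_{r'})^{\rm tr}=N(g_1,\dots,g_r)^{\rm tr}$. Then for each $i=1,\dots,s$ there exists an element $f_i\in\{g'_1,\dots,g'_{r'}\}$ with $\operatorname{LT}_\sigma(f_i)=z_i$, and $(f_1,\dots,f_s)$ is a $Z$-separating tuple of polynomials in $I$.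
   Context: $\operatorname{Supp}(f)$ is the set of terms occurring in $f$; $\operatorname{Lin}(f)$ is the homogeneous degree-1 component of $f$; $\langle\cdot\rangle_K$ denotes $K$-linear span. A tuple $(f_1,\dots,f_s)$ of polynomials in an ideal $I$ is $Z$-separating if there is a term ordering $\sigma$ with $\operatorname{LT}_\sigma(f_i)=z_i$ for all $i$. For $W\in\mathbb{N}^n$ the $W$-degree of $x_1^{a_1}\cdots x_n^{a_n}$ is $\sum w_ia_i$; a term ordering $\sigma$ is compatible with the grading given by $W$ if $t>_\sigma t'$ whenever the $W$-degree of $t$ exceeds that of $t'$. Procedure $\mathrm{LI}$ (linear interreduction), applied to a tuple $Z=(z_1,\dots,z_s)$ of distinct indeterminates and polynomials $g_1,\dots,g_r$: let $t_1>\dots>t_m$ (lexicographic order, $x_1>\dots>x_n$) be the terms of $\bigcup_j\operatorname{Supp}(g_j)$ other than $z_1,\dots,z_s$; form the coefficient matrix $M$ of $g_1,\dots,g_r$ w.r.t. column order $(z_1,\dots,z_s,t_1,\dots,t_m)$; output the polynomials whose coefficient vectors are the nonzero rows of the reduced row echelon form of $M$, in order. Procedure $\mathrm{CHECK}$ on input $(g_1,\dots,g_r)$ and $Z$: (1) set $w_1=\dots=w_n=0$, $\delta=\max_j\deg(g_j)$, $d=1$. (2) In each $g_j$ delete every monomial not divisible by some indeterminate of $Z$. (3) If $\dim_K\langle\operatorname{Lin}(g_1),\dots,\operatorname{Lin}(g_r)\rangle_K<\#Z$, return ``Fail''. (4) Repeat: (i) replace the current list $g_1,\dots,g_r$ by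 the output of $\mathrm{LI}$ applied to the current $Z$ and the current list; (ii) let $\widetilde Z$ be the set of indeterminates of the current $Z$ that occur as elements of the current list; (iii) if $\widetilde Z=\emptyset$, return ``Fail''; (iv) for each $z\in\widetilde Z$, say $z=x_k$, set $w_k=d$ and remove $z$ from $Z$; (v) in each current $g_j$ delete every monomial not divisible by some indeterminate of the (updated) $Z$; (vi) replace $d$ by $\delta d+1$; until $Z$ is empty. (5) Return $W=(w_1,\dots,w_n)$. *)

(* Defs.v *)
From HB Require Import structures.
From mathcomp Require Import all_boot all_order all_algebra.
From mathcomp Require Import mpoly.
Set Implicit Arguments. Unset Strict Implicit. Unset Printing Implicit Defensive.
Import Order.TTheory GRing.Theory.
Local Open Scope ring_scope.

Section Defs.
Variables (K : fieldType) (n : nat).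
Local Notation P := {mpoly K[n]}.
Local Notation mon := 'X_{1..n}.

Definition ltT (le : rel mon) (a b : mon) : bool := le a b && (a != b).

Definition term_ordering (le : rel mon) : Prop :=
  [/\ reflexive le, antisymmetric le, transitive le & total le] /\
  (forall m, le mnm0 m) /\
  (forall a b c, le a b -> le (mnm_add a c) (mnm_add b c)).

Definition LT_is (le : rel mon) (f : P) (t : mon) : Prop :=
  t \in msupp f /\ (forall u, u \in msupp f -> le u t).

Definition wdeg (W : {ffun 'I_n -> nat}) (m : mon) : nat :=
  (\sum_(i < n) W i * m i)%N.

Definition compatible (W : {ffun 'I_n -> nat}) (le : rel mon) : Prop :=
  forall t t', (wdeg W t' < wdeg W t)%N -> ltT le t' t.

Definition in_ideal (gs : seq P) (f : P) : Prop :=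
  exists c : 'I_(size gs) -> P, f = \sum_(j < size gs) c j * gs`_j.

Definition Z_separating (gs : seq P) (s : nat) (z : 'I_s -> 'I_n)
    (f : 'I_s -> P) : Prop :=
  (forall i, in_ideal gs (f i)) /\
  exists le, term_ordering le /\ forall i, LT_is le (f i) (mnm1 (z i)).

Definition coefmx (gs : seq P) (cols : seq mon) : 'M[K]_(size gs, size cols) :=
  \matrix_(j < size gs, k < size cols) (gs`_j)@_(nth mnm0 cols k).

Definition rowpoly (cols : seq mon) p (A : 'M[K]_(p, size cols)) (i : 'I_p) : P :=
  \sum_(k < size cols) A i k *: 'X_[nth mnm0 cols k].

Definition rref_nz p m (A : 'M[K]_(p, m)) : Prop :=
  exists piv : 'I_p -> 'I_m,
    [/\ (forall i j : 'I_p, (i < j)%N -> (piv i < piv j)%N),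
        (forall i, A i (piv i) = 1),
        (forall i k, k != i -> A k (piv i) = 0) &
        (forall i (j : 'I_m), (j < piv i)%N -> A i j = 0)].

Definition lex_gt (a b : mon) : bool :=
  [exists i : 'I_n, (b i < a i)%N && [forall j : 'I_n, (j < i)%N ==> (a j == b j)]].

(* The RREF of
   M is described as N *m M for some N, being in RREF without zero rows
   and having the same row space as M (this determines it uniquely). *)
Definition LI (Z : seq 'I_n) (gs gs' : seq P) : Prop :=
  exists ts : seq mon,
    [/\ uniq ts,
        (forall t, t \in ts <->
           ((exists2 g, g \in gs & t \in msupp g) /\ ~ (exists2 x, x \in Z & t = mnm1 x))),
        sorted lex_gt ts &
        let cols := [seq mnm1 x | x <- Z] ++ ts in
        exists p (N : 'M[K]_(p, size gs)),
          [/\ rref_nz (N *m coefmx gs cols),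
              (coefmx gs cols <= N *m coefmx gs cols)%MS &
              gs' = [seq rowpoly (N *m coefmx gs cols) i | i <- enum 'I_p]]].

Definition del_nondiv (Z : seq 'I_n) (g : P) : P :=
  \sum_(m <- msupp g | has (fun x => (0 < m x)%N) Z) g@_m *: 'X_[m].

Definition Lin (g : P) : P := \sum_(k < n) g@_(mnm1 k) *: 'X_k.

Definition lin_dim (gs : seq P) : nat :=
  \rank (\matrix_(j < size gs, k < n) (Lin gs`_j)@_(mnm1 k)).

Definition Zsel (Z : seq 'I_n) (gs : seq P) : seq 'I_n :=
  [seq x <- Z | 'X_x \in gs].

Definition upd_w (w : {ffun 'I_n -> nat}) (Zt : seq 'I_n) (d : nat) :
  {ffun 'I_n -> nat} := [ffun k => if k \in Zt then d else w k].

(* check_loop delta gs Z w d W : the loop of step (4), started with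
   current list gs, current Z, current weights w and current d,
   terminates (without "Fail") returning W. *)
Inductive check_loop (delta : nat) :
    seq P -> seq 'I_n -> {ffun 'I_n -> nat} -> nat -> {ffun 'I_n -> nat} -> Prop :=
| CL_stop gs Z w d gs1 :
    LI Z gs gs1 ->
    Zsel Z gs1 != [::] ->
    [seq x <- Z | x \notin Zsel Z gs1] = [::] ->
    check_loop delta gs Z w d (upd_w w (Zsel Z gs1) d)
| CL_cont gs Z w d gs1 Wf :
    LI Z gs gs1 ->
    Zsel Z gs1 != [::] ->
    [seq x <- Z | x \notin Zsel Z gs1] != [::] ->
    check_loop delta
      [seq del_nondiv [seq x <- Z | x \notin Zsel Z gs1] g | g <- gs1]
      [seq x <- Z | x \notin Zsel Z gs1]
      (upd_w w (Zsel Z gs1) d) (delta * d + 1)%N Wf ->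
    check_loop delta gs Z w d Wf.

Definition CHECK_returns (gs : seq P) (Z : seq 'I_n) (W : {ffun 'I_n -> nat}) : Prop :=
  let delta := (\max_(g <- gs) (msize g).-1)%N in
  let gs0 := [seq del_nondiv Z g | g <- gs] in
  ~ (lin_dim gs0 < size Z)%N /\
  check_loop delta gs0 Z [ffun => 0%N] 1%N W.

End Defs.

(* Main.v *)
Require Import Defs.
From HB Require Import structures.
From mathcomp Require Import all_boot all_order all_algebra.
From mathcomp Require Import mpoly.
From mathcomp Require Import zify.
Set Implicit Arguments. Unset Strict Implicit. Unset Printing Implicit Defensive.
Import Order.TTheory GRing.Theory.
Local Open Scope ring_scope.

Section Aux.
Variables (K : fieldType) (n : nat).
Local Notation P := {mpoly K[n]}.
Local Notation mon := 'X_{1..n}.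

Lemma mcoeff_sumE (I : Type) (r : seq I) (Pr : pred I) (F : I -> P) m :
  (\sum_(i <- r | Pr i) F i)@_m = \sum_(i <- r | Pr i) (F i)@_m.
Proof. exact: raddf_sum. Qed.

Lemma coef_rowpoly_in (cols : seq mon) p (A : 'M[K]_(p, size cols)) i (k : 'I_(size cols)) :
  uniq cols -> (rowpoly A i)@_(nth mnm0 cols k) = A i k.
Proof.
move=> u; rewrite /rowpoly mcoeff_sumE (bigD1 k) //= mcoeffZ mcoeffX eqxx mulr1.
rewrite big1 ?addr0 // => k' nk; rewrite mcoeffZ mcoeffX.
rewrite nth_uniq ?ltn_ord // (inj_eq val_inj) (negbTE nk) mulr0 //.
Qed.

Lemma coef_rowpoly_out (cols : seq mon) p (A : 'M[K]_(p, size cols)) i m :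
  m \notin cols -> (rowpoly A i)@_m = 0.
Proof.
move=> nm; rewrite /rowpoly mcoeff_sumE big1 // => k _; rewrite mcoeffZ mcoeffX.
case: eqP => [e|]; last by rewrite mulr0.
by move: nm; rewrite -e mem_nth.
Qed.

Lemma mnm1_wdeg (W : {ffun 'I_n -> nat}) x : wdeg W (mnm1 x) = W x.
Proof.
rewrite /wdeg (bigD1 x) //= mnm1E eqxx muln1 big1 ?addn0 // => i ni.
by rewrite mnm1E eq_sym (negbTE ni) muln0.
Qed.

Lemma coef_del Z (g : P) m :
  (del_nondiv Z g)@_m = if has (fun x => (0 < m x)%N) Z then g@_m else 0.
Proof.
rewrite /del_nondiv mcoeff_sumE.
case: (boolP (m \in msupp g)) => ms.
  rewrite big_mkcond (bigD1_seq m) ?msupp_uniq //=.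
  rewrite big1 ?addr0; first by case: ifP; rewrite ?mcoeffZ ?mcoeffX ?eqxx ?mulr1.
  by move=> m' nm; case: ifP => // _; rewrite mcoeffZ mcoeffX (negbTE nm) mulr0.
rewrite big1; first by case: ifP => // _; apply/esym/eqP; rewrite mcoeff_eq0.
move=> m' _; rewrite mcoeffZ mcoeffX; case: eqP => [e|]; last by rewrite mulr0.
by move: ms; rewrite -e mcoeff_msupp => /negPn/eqP ->; rewrite mul0r.
Qed.


Lemma mnm1_inj : injective (@mnm1 n).
Proof. by move=> i j /eqP; rewrite eq_mnm1 => /eqP. Qed.

Lemma LI_comb (Z : seq 'I_n) (G G1 : seq P) : uniq Z -> LI Z G G1 ->
  forall g1, g1 \in G1 -> exists c : 'I_(size G) -> K, g1 = \sum_(j < size G) c j *: G`_j.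
Proof.
move=> uZ [ts [uts tsP _ [p [N [_ _ ->]]]]] g1 /mapP[i _ ->].
set cols := [seq mnm1 x | x <- Z] ++ ts.
have ucols : uniq cols.
  rewrite cat_uniq (map_inj_uniq mnm1_inj) uZ uts /= andbT.
  apply/hasPn => t /tsP [_ H]; apply/negP => /mapP [x xZ tx]; apply: H; by exists x.
have supp : forall j : 'I_(size G), forall m, G`_j@_m != 0 -> m \in cols.
  move=> j m nz; rewrite mem_cat; case: (boolP (m \in [seq mnm1 x | x <- Z])) => //= nmZ.
  apply/tsP; split; first by exists G`_j; [apply: mem_nth | rewrite mcoeff_msupp].
  by case=> x xZ mx; move: nmZ; rewrite mx map_f.
exists (fun j => N i j); apply/mpolyP => m.
rewrite [in RHS]mcoeff_sumE.
case: (boolP (m \in cols)) => mc.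
  have kl : (index m cols < size cols)%N by rewrite index_mem.
  have -> : m = nth mnm0 cols (Ordinal kl) by rewrite /= nth_index.
  rewrite coef_rowpoly_in // !mxE; apply: eq_bigr => j _; by rewrite mcoeffZ mxE.
rewrite coef_rowpoly_out // big1 // => j _; rewrite mcoeffZ.
case: (boolP (G`_j@_m == 0)) => [/eqP -> |nz]; first by rewrite mulr0.
by move: mc; rewrite (supp _ _ nz).
Qed.


Lemma wdeg_eq (W1 W2 : {ffun 'I_n -> nat}) (m : mon) :
  (forall i, m i != 0%N -> W1 i = W2 i) -> wdeg W1 m = wdeg W2 m.
Proof.
move=> H; apply: eq_bigr => i _; case: (boolP (m i == 0%N)) => [/eqP -> | /H ->].
  by rewrite !muln0. by [].
Qed.

Lemma wdeg_le (W : {ffun 'I_n -> nat}) d (m : mon) :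
  (forall i, m i != 0%N -> (W i <= d)%N) -> (wdeg W m <= d * mdeg m)%N.
Proof.
move=> H; rewrite mdegE /wdeg big_distrr /=; apply: leq_sum => i _.
case: (boolP (m i == 0%N)) => [/eqP -> | /H Hi]; first by rewrite !muln0.
by rewrite leq_mul2r Hi orbT.
Qed.

Lemma sum_coef_nz (I : finType) (c : I -> K) (F : I -> P) m :
  (\sum_i c i *: F i)@_m != 0 -> exists i, (F i)@_m != 0.
Proof.
move=> H; apply/existsP; apply: contraR H; rewrite negb_exists => /forallP Hf.
rewrite mcoeff_sumE big1 // => i _; rewrite mcoeffZ.
by move: (Hf i); rewrite negbK => /eqP ->; rewrite mulr0.
Qed.

Variable gs : seq P.

Definition Sp (f : P) := exists c : 'I_(size gs) -> K, f = \sum_(j < size gs) c j *: gs`_j.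

Definition small (Z : seq 'I_n) (w : {ffun 'I_n -> nat}) (d : nat) (h : P) :=
  forall m, h@_m != 0 -> (forall x, x \in Z -> m x = 0%N) /\ (wdeg w m < d)%N.

Definition Rr Z w d (g : P) := exists f, Sp f /\ small Z w d (f - g).

Lemma Rr0 Z w d : Rr Z w d 0.
Proof.
exists 0; split; first by exists (fun _ => 0); rewrite big1 // => j _; rewrite scale0r.
by move=> m; rewrite subr0 mcoeff0 eqxx.
Qed.

Lemma RrD Z w d g1 g2 : Rr Z w d g1 -> Rr Z w d g2 -> Rr Z w d (g1 + g2).
Proof.
move=> [f1 [[c1 ->] s1]] [f2 [[c2 ->] s2]].
exists ((\sum_(j < size gs) c1 j *: gs`_j) + (\sum_(j < size gs) c2 j *: gs`_j)); split.
  by exists (fun j => c1 j + c2 j); rewrite -big_split; apply: eq_bigr => j _; rewrite scalerDl.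
move=> m; rewrite opprD addrACA mcoeffD => nz.
case: (boolP ((\sum_(j < size gs) c1 j *: gs`_j - g1)@_m == 0)) => [/eqP z1|].
  by apply: s2; move: nz; rewrite z1 add0r.
by move/s1.
Qed.

Lemma RrZ Z w d a g : Rr Z w d g -> Rr Z w d (a *: g).
Proof.
move=> [f [[c ->] s]]; exists (a *: \sum_(j < size gs) c j *: gs`_j); split.
  by exists (fun j => a * c j); rewrite scaler_sumr; apply: eq_bigr => j _; rewrite scalerA.
move=> m; rewrite -scalerBr mcoeffZ => nz; apply: s; apply: contraNneq nz => ->.
by rewrite mulr0.
Qed.

Lemma Rr_comb Z w d (G : seq P) (c : 'I_(size G) -> K) :
  (forall g, g \in G -> Rr Z w d g) -> Rr Z w d (\sum_(j < size G) c j *: G`_j).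
Proof.
move=> H; apply: (big_ind (Rr Z w d)); [exact: Rr0 | exact: RrD |].
by move=> j _; apply: RrZ; apply: H; apply: mem_nth.
Qed.

Definition Inv delta (G : seq P) (Z : seq 'I_n) (w : {ffun 'I_n -> nat}) d :=
  [/\ uniq Z, (forall x, x \notin Z -> (w x <= d)%N), (d <= delta * d + 1)%N,
      (forall g, g \in G -> forall m, g@_m != 0 -> (mdeg m <= delta)%N) &
      (forall g, g \in G -> Rr Z w d g)].

Lemma loop_W delta (G : seq P) Z w d W : check_loop delta G Z w d W ->
  forall x, x \notin Z -> W x = w x.
Proof.
elim=> {G Z w d W}.
  move=> G Z w d gs1 _ _ _ x xZ; rewrite ffunE; case: ifP => // /[dup] H.
  by rewrite mem_filter => /andP[_ xZ']; rewrite xZ' in xZ.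
move=> G Z w d gs1 Wf _ _ _ _ IH x xZ.
rewrite IH; last by rewrite mem_filter negb_and xZ orbT.
rewrite ffunE; case: ifP => //.
by rewrite mem_filter => /andP[_ xZ']; rewrite xZ' in xZ.
Qed.


Lemma step delta (G : seq P) Z w d gs1 : Inv delta G Z w d -> LI Z G gs1 ->
  forall g1, g1 \in gs1 -> Rr Z w d g1 /\ forall m, g1@_m != 0 -> (mdeg m <= delta)%N.
Proof.
move=> [uZ _ _ Hdeg HR] HLI g1 g1in; have [c ->] := LI_comb uZ HLI g1in.
split; first by apply: Rr_comb.
move=> m /sum_coef_nz [j nz]; exact: (Hdeg _ (mem_nth 0 (ltn_ord j)) _ nz).
Qed.

Lemma Inv_next delta (G : seq P) Z w d gs1 : Inv delta G Z w d -> LI Z G gs1 ->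
  Inv delta [seq del_nondiv [seq x <- Z | x \notin Zsel Z gs1] g | g <- gs1]
      [seq x <- Z | x \notin Zsel Z gs1] (upd_w w (Zsel Z gs1) d) (delta * d + 1).
Proof.
move=> I0 HLI; have Hs := step I0 HLI; case: I0 => [uZ Hw Hd Hdeg HR].
set Zt := Zsel Z gs1; set Z' := [seq x <- Z | x \notin Zt].
have ZtZ : forall x, x \in Zt -> x \in Z by move=> x; rewrite mem_filter => /andP[].
have Hw' : forall x, x \notin Z' -> (upd_w w Zt d x <= d)%N.
  move=> x; rewrite ffunE mem_filter negb_and negbK; case: ifP => // _ /= xZ.
  by apply: Hw.
have dd : (d <= delta * d + 1)%N by [].
split.
- exact: filter_uniq.
- by move=> x /Hw' H; apply: leq_trans H dd.
- case: delta {Hs Hd Hdeg dd} => [|k]; first by rewrite !mul0n.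
  nia.
- move=> g /mapP [g1 g1in ->] m; rewrite coef_del; case: ifP => _.
    exact: (Hs _ g1in).2.
  by rewrite eqxx.
move=> g0 /mapP [g1 g1in ->]; have [[f [Sf sf]] Hdg] := Hs _ g1in.
exists f; split => // m.
have -> : f - del_nondiv Z' g1 = (f - g1) + (g1 - del_nondiv Z' g1) by rewrite addrA subrK.
rewrite mcoeffD.
case: (boolP ((f - g1)@_m == 0)) => [/eqP -> | nz1].
  rewrite add0r mcoeffB coef_del; case: ifP => hz; first by rewrite subrr eqxx.
  rewrite subr0 => nz; split.
    move=> x xZ'; apply/eqP; rewrite -leqn0 leqNgt; apply/negP => pos.
    by move: hz; rewrite (introT hasP) //; exists x.
  have Hd1 := Hdg _ nz.
  apply: (@leq_ltn_trans (d * mdeg m)).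
    apply: wdeg_le => i mi; apply: Hw'; apply/negP => iZ'.
    by move: hz; rewrite (introT hasP) //; exists i => //; rewrite lt0n.
  by rewrite addn1 ltnS mulnC leq_mul2r Hd1 orbT.
move=> _; have [H0 H1] := sf _ nz1.
have mZ : forall i, m i != 0%N -> i \notin Z.
  by move=> i mi; apply/negP => /H0 /eqP; rewrite (negbTE mi).
split.
  by move=> x; rewrite mem_filter => /andP[_ /H0].
rewrite (@wdeg_eq _ w); first by apply: leq_trans H1 _.
move=> i /mZ iZ; rewrite ffunE; case: ifP => // /ZtZ iZ2.
by rewrite iZ2 in iZ.
Qed.



Lemma removed delta (G : seq P) Z w d gs1 (W : {ffun 'I_n -> nat}) x :
  Inv delta G Z w d -> LI Z G gs1 -> x \in Zsel Z gs1 ->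
  (forall y, y \notin [seq x <- Z | x \notin Zsel Z gs1] -> W y = upd_w w (Zsel Z gs1) d y) ->
  exists f, Sp f /\ forall m, (f - 'X_x)@_m != 0 -> (wdeg W m < W x)%N.
Proof.
move=> I0 HLI xZt HW; have Hs := step I0 HLI.
have Xin : 'X_x \in gs1 by move: xZt; rewrite mem_filter => /andP[].
have [[f [Sf sf]] _] := Hs _ Xin.
have ZtZ : forall y, y \in Zsel Z gs1 -> y \in Z by move=> y; rewrite mem_filter => /andP[].
exists f; split => // m /sf [H0 H1].
have Wx : W x = d.
  by rewrite HW ?ffunE ?xZt // mem_filter xZt.
rewrite Wx (@wdeg_eq _ w) // => i mi.
have iZ : i \notin Z by apply/negP => /H0 /eqP; rewrite (negbTE mi).
rewrite HW; last by rewrite mem_filter negb_and (negbTE iZ) orbT.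
rewrite ffunE; case: ifP => // /ZtZ iZ2; by rewrite iZ2 in iZ.
Qed.

Lemma loop_main delta (G : seq P) Z w d W : check_loop delta G Z w d W ->
  Inv delta G Z w d -> forall x, x \in Z ->
  exists f, Sp f /\ forall m, (f - 'X_x)@_m != 0 -> (wdeg W m < W x)%N.
Proof.
elim=> {G Z w d W}.
  move=> G Z w d gs1 HLI _ Hemp I0 x xZ.
  have xZt : x \in Zsel Z gs1.
    apply: contraT => nx; suff : x \in [seq x <- Z | x \notin Zsel Z gs1] by rewrite Hemp.
    by rewrite mem_filter nx.
  by apply: (removed I0 HLI xZt).
move=> G Z w d gs1 Wf HLI _ _ HC IH I0 x xZ.
case: (boolP (x \in Zsel Z gs1)) => xZt.
  apply: (removed (W:=Wf) I0 HLI xZt) => y yZ.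
  by rewrite (loop_W HC yZ).
apply: IH; first exact: (Inv_next I0 HLI).
by rewrite mem_filter xZt.
Qed.


Lemma Inv_init Z : uniq Z ->
  Inv (\max_(g <- gs) (msize g).-1) [seq del_nondiv Z g | g <- gs] Z [ffun => 0%N] 1.
Proof.
move=> uZ; split => //.
- by move=> x _; rewrite ffunE.
- by rewrite muln1 addn1.
- move=> g0 /mapP [g gin ->] m; rewrite coef_del; case: ifP => _; last by rewrite eqxx.
  rewrite -mcoeff_msupp => /msize_mdeg_lt H.
  apply: leq_trans (@leq_bigmax_seq _ gs xpredT (fun g : P => (msize g).-1) g gin isT).
  by rewrite -ltnS (ltn_predK H).
move=> g0 /mapP [g gin ->]; exists g; split.
  have jl : (index g gs < size gs)%N by rewrite index_mem.
  exists (fun j => (j == Ordinal jl)%:R); rewrite (bigD1 (Ordinal jl)) //= eqxx scale1r.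
  rewrite big1 ?addr0 ?nth_index // => j /negbTE ->; by rewrite scale0r.
move=> m; rewrite mcoeffB coef_del; case: ifP => hz; first by rewrite subrr eqxx.
move=> _; split.
  move=> x xZ'; apply/eqP; rewrite -leqn0 leqNgt; apply/negP => pos.
  by move: hz; rewrite (introT hasP) //; exists x.
by rewrite /wdeg big1 // => i _; rewrite ffunE.
Qed.

Lemma LT_of (le : rel mon) (W : {ffun 'I_n -> nat}) (f : P) x :
  term_ordering le -> compatible W le ->
  (forall m, (f - 'X_x)@_m != 0 -> (wdeg W m < W x)%N) -> LT_is le f (mnm1 x).
Proof.
move=> [[lrefl _ _ _] _] Hc H.
have fx : forall u, u != mnm1 x -> f@_u = (f - 'X_x)@_u.
  by move=> u nu; rewrite mcoeffB mcoeffX eq_sym (negbTE nu) subr0.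
split.
  rewrite mcoeff_msupp.
  have -> : f@_(mnm1 x) = (f - 'X_x)@_(mnm1 x) + 1 by rewrite mcoeffB mcoeffX eqxx subrK.
  case: (boolP ((f - 'X_x)@_(mnm1 x) == 0)) => [/eqP -> | /H].
    by rewrite add0r oner_neq0.
  by rewrite mnm1_wdeg ltnn.
move=> u; case: (eqVneq u (mnm1 x)) => [-> _ | nu]; first exact: lrefl.
rewrite mcoeff_msupp fx // => /H lt; rewrite -(mnm1_wdeg W x) in lt.
by have /andP[] := Hc _ _ lt.
Qed.


Lemma rref_LT (le : rel mon) (ts : seq mon) r' (N : 'M[K]_(r', size gs)) f t :
  term_ordering le -> uniq ts ->
  (forall t, t \in ts <-> exists2 g, g \in gs & t \in msupp g) ->
  sorted (fun a b => ltT le b a) ts ->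
  rref_nz (N *m coefmx gs ts) ->
  (coefmx gs ts <= N *m coefmx gs ts)%MS ->
  Sp f -> LT_is le f t ->
  exists i : 'I_r', LT_is le (\sum_(j < size gs) N i j *: gs`_j) t.
Proof.
move=> [[lrefl lanti ltr _] _] uts tsP srt [piv [pinc p1 p0 pz]] /submxP [D HD] [c Hf] [tf Hmax].
have Rtr : transitive (fun a b => ltT le b a).
  move=> b a c' /andP[ba nba] /andP[cb ncb]; apply/andP; split; first exact: ltr ba.
  apply/eqP => ca; move: ca ba cb nba => -> ba ab.
  by rewrite (lanti b a) ?ba ?ab ?eqxx.
have Hsrt : forall k1 k2 : 'I_(size ts), (k1 < k2)%N ->
    ltT le (nth mnm0 ts k2) (nth mnm0 ts k1).
  move=> k1 k2 lt; apply: (sorted_ltn_nth Rtr mnm0 srt) => //; by rewrite inE ltn_ord.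
have inS : forall (d : 'I_(size gs) -> K) u,
    (\sum_(j < size gs) d j *: gs`_j)@_u != 0 -> u \in ts.
  move=> d u /sum_coef_nz [j nz]; apply/tsP; exists gs`_j; first exact: mem_nth.
  by rewrite mcoeff_msupp.
have coefS : forall (d : 'I_(size gs) -> K) (k : 'I_(size ts)),
    (\sum_(j < size gs) d j *: gs`_j)@_(nth mnm0 ts k) = \sum_j d j * coefmx gs ts j k.
  by move=> d k; rewrite mcoeff_sumE; apply: eq_bigr => j _; rewrite mcoeffZ mxE.
have tts : t \in ts by apply: (inS c); rewrite -Hf -mcoeff_msupp.
have kl : (index t ts < size ts)%N by rewrite index_mem.
set kz := Ordinal kl.
have tkz : nth mnm0 ts kz = t by rewrite /= nth_index.
set A := N *m coefmx gs ts in HD pinc p1 p0 pz *.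
set c' := \row_j c j *m D.
have vE : forall k : 'I_(size ts), f@_(nth mnm0 ts k) = \sum_i c' 0 i * A i k.
  move=> k; rewrite Hf coefS.
  have -> : \sum_j c j * coefmx gs ts j k = ((\row_j c j) *m coefmx gs ts) 0 k.
    by rewrite [RHS]mxE; apply: eq_bigr => j _; rewrite !mxE.
  by rewrite HD mulmxA mxE.
have F1 : forall k : 'I_(size ts), (k < kz)%N -> f@_(nth mnm0 ts k) = 0.
  move=> k lt; apply/eqP; rewrite mcoeff_eq0; apply/negP => /Hmax lek.
  have /andP[lkt nkt] := Hsrt _ _ lt; move: nkt; rewrite tkz in lkt *.
  by rewrite (lanti t (nth mnm0 ts k)) ?lkt ?lek ?eqxx.
have F2 : f@_(nth mnm0 ts kz) != 0 by rewrite tkz -mcoeff_msupp.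
have [i1 ci1] : exists i1, c' 0 i1 != 0.
  apply/existsP; apply: contraR F2; rewrite negb_exists => /forallP H.
  rewrite vE big1 // => i _; by move: (H i); rewrite negbK => /eqP ->; rewrite mul0r.
case: (@arg_minnP _ i1 (fun i => c' 0 i != 0) (fun i : 'I_r' => i : nat) ci1) => i0 ci0 Hmin.
have F3 : f@_(nth mnm0 ts (piv i0)) = c' 0 i0.
  rewrite vE (bigD1 i0) //= p1 mulr1 big1 ?addr0 // => i ni.
  by rewrite p0 ?mulr0.
have F4 : forall k : 'I_(size ts), (k < piv i0)%N -> f@_(nth mnm0 ts k) = 0.
  move=> k lt; rewrite vE big1 // => i _.
  case: (boolP (c' 0 i == 0)) => [/eqP -> | /Hmin le0]; first by rewrite mul0r.
  case: (ltngtP i0 i) le0 => // [lt0 _ | /val_inj <- _].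
    by rewrite pz ?mulr0 // (ltn_trans lt (pinc _ _ lt0)).
  by rewrite pz ?mulr0.
have pk : piv i0 = kz.
  apply: val_inj; case: (ltngtP (piv i0) kz) => // lt.
    by move: ci0; rewrite -F3 F1 ?eqxx.
  by move: F2; rewrite F4 ?eqxx.
exists i0.
have gE : forall k : 'I_(size ts), (\sum_(j < size gs) N i0 j *: gs`_j)@_(nth mnm0 ts k) = A i0 k.
  by move=> k; rewrite coefS mxE.
split.
  by rewrite -tkz mcoeff_msupp gE -pk p1 oner_neq0.
move=> u; rewrite mcoeff_msupp => nz.
have uts' := inS _ _ nz.
have ul : (index u ts < size ts)%N by rewrite index_mem.
have uE : nth mnm0 ts (Ordinal ul) = u by rewrite /= nth_index.
move: nz; rewrite -uE gE -tkz => nz.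
case: (ltngtP (Ordinal ul) kz) => [lt | gt | /val_inj ->]; last exact: lrefl.
  by move: nz; rewrite pz ?eqxx // pk.
by have /andP[] := Hsrt _ _ gt.
Qed.

End Aux.

Theorem mainTheorem5 (K : fieldType) (n : nat) (gs : seq {mpoly K[n]})
    (s : nat) (z : 'I_s -> 'I_n) (W : {ffun 'I_n -> nat})
    (le : rel 'X_{1..n}) (ts : seq 'X_{1..n})
    (r' : nat) (N : 'M[K]_(r', size gs)) :
  ~ in_ideal gs 1 ->
  injective z ->
  CHECK_returns gs [seq z i | i <- enum 'I_s] W ->
  term_ordering le ->
  compatible W le ->
  uniq ts ->
  (forall t, t \in ts <-> exists2 g, g \in gs & t \in msupp g) ->
  sorted (fun a b => ltT le b a) ts ->
  rref_nz (N *m coefmx gs ts) ->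
  (coefmx gs ts <= N *m coefmx gs ts)%MS ->
  let gs' := [seq \sum_(j < size gs) N i j *: gs`_j | i <- enum 'I_r'] in
  exists f : 'I_s -> {mpoly K[n]},
    (forall i, f i \in gs' /\ LT_is le (f i) (mnm1 (z i))) /\
    Z_separating gs z f.
Proof.
move=> _ zinj [_ Hloop] Hto Hcomp uts tsP srt Hrref Hsub gs'.
have uZ : uniq [seq z i | i <- enum 'I_s] by rewrite map_inj_uniq ?enum_uniq.
have Hm := loop_main Hloop (Inv_init gs uZ).
have H1 : forall i, exists g, g \in gs' /\ LT_is le g (mnm1 (z i)).
  move=> i; have [f0 [Sf Hb]] := Hm (z i) (map_f _ (mem_enum _ i)).
  have LT0 := LT_of Hto Hcomp Hb.
  have [i0 Hi0] := rref_LT Hto uts tsP srt Hrref Hsub Sf LT0.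
  exists (\sum_(j < size gs) N i0 j *: gs`_j); split => //.
  by apply: (map_f (fun i => \sum_(j < size gs) N i j *: gs`_j)); exact: mem_enum.
have [f Hf] := fin_all_exists H1.
exists f; split => //; split.
  move=> i; have [/mapP [i0 _ ->] _] := Hf i.
  exists (fun j => (N i0 j)%:MP); apply: eq_bigr => j _; by rewrite mul_mpolyC.
by exists le; split => // i; have [] := Hf i.
Qed.
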